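(* Let $\mathsf{A}$ and $\mathsf{B}$ be density matrices on the same finite-dimensional complex Hilbert space with $\operatorname{rank}(\mathsf{A}) = \operatorname{rank}(\mathsf{B})$, and let $k \in [0,1]$. Then $$\mathsf{A} \sqsubseteq_k \mathsf{B} \iff \neg_{supp}\mathsf{B} \sqsubseteq_k \neg_{supp}\mathsf{A}.$$
   Context: A density matrix is a positive semidefinite Hermitian matrix of trace $1$. A Hermitian matrix $M$ is called positive, written $M \geq 0$, if it is positive semidefinite. For Hermitian matrices $\mathsf{X}, \mathsf{Y}$ and a real number $k \in [0,1]$, $k$-hyponymy is defined by $\mathsf{X} \sqsubseteq_k \mathsf{Y}$ iff $\mathsf{Y} - k\mathsf{X} \geq 0$. The support inverse of a positive semidefinite matrix $\mathsf{X}$ with spectral decomposition $\mathsf{X} = \sum_i \lambda_i |i\rangle\langle i|$ (orthonormal eigenbasis $\{|i\rangle\}$) is $\neg_{supp}\mathsf{X} = \sum_{i:\lambda_i \neq 0} \lambda_i^{-1} |i\rangle\langle i|$, i.e. the Moore–Penrose pseudoinverse of $\mathsf{X}$; it has the same eigenbasis as $\mathsf{X}$, inverts the nonzero eigenvalues, and is zero on the kernel of $\mathsf{X}$. *)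

(* Defs.v *)
(* finite-dimensional Hilbert space = C^n with C a
   numClosedFieldType (e.g. algC, or complex numbers). *)
From HB Require Import structures.
From mathcomp Require Import all_boot all_order all_algebra.
From mathcomp Require Import sesquilinear spectral.
Set Implicit Arguments.
Unset Strict Implicit.
Unset Printing Implicit Defensive.
Import Order.TTheory GRing.Theory Num.Theory.
Local Open Scope ring_scope.

Section Defs.
Variable C : numClosedFieldType.

Definition psdmx n (M : 'M[C]_n) : Prop :=
  M \is hermsymmx /\
  forall v : 'rV[C]_n, 0 <= (v *m M *m (map_mx Num.conj v)^T) 0 0.

Definition density n (M : 'M[C]_n) : Prop := psdmx M /\ \tr M = 1.

Definition hyponym n (k : C) (X Y : 'M[C]_n) : Prop := psdmx (Y - k *: X).

Definition supp_inv n (M : 'M[C]_n) : 'M[C]_n :=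
  invmx (spectralmx M)
  *m diag_mx (map_mx (fun x : C => if x == 0 then 0 else x^-1) (spectral_diag M))
  *m spectralmx M.
End Defs.

(* Main.v *)
Require Import Defs.
From HB Require Import structures.
From mathcomp Require Import all_boot all_order all_algebra.
From mathcomp Require Import sesquilinear spectral.
From mathcomp Require Import ring.
Import Order.TTheory GRing.Theory Num.Theory.
Local Open Scope ring_scope.
Local Open Scope sesquilinear_scope.

Section S.
Context {C : numClosedFieldType}.

Lemma adjM m n p (A : 'M[C]_(m, n)) (B : 'M[C]_(n, p)) : (A *m B)^t* = B^t* *m A^t*.
Proof. by rewrite trmx_mul map_mxM. Qed.
Lemma adjD m n (A B : 'M[C]_(m, n)) : (A + B)^t* = A^t* + B^t*.
Proof. by apply/matrixP=> i j; rewrite !mxE rmorphD. Qed.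
Lemma adjB m n (A B : 'M[C]_(m, n)) : (A - B)^t* = A^t* - B^t*.
Proof. by apply/matrixP=> i j; rewrite !mxE rmorphB. Qed.
Lemma adjZ m n c (A : 'M[C]_(m, n)) : (c *: A)^t* = c^* *: A^t*.
Proof. by apply/matrixP=> i j; rewrite !mxE rmorphM. Qed.

Definition q {n} (M : 'M[C]_n) (v : 'rV[C]_n) := (v *m M *m v^t*) 0 0.

Lemma psdP {n} (M : 'M[C]_n) : psdmx M <-> (M^t* = M /\ forall v, 0 <= q M v).
Proof.
rewrite /psdmx /q; split=> -[h1 h2]; split.
- by move/is_hermitianmxP: h1; rewrite expr0 scale1r => {2}->.
- by move=> v; rewrite -map_trmx; apply: h2.
- by apply/is_hermitianmxP; rewrite expr0 scale1r h1.
- by move=> v; rewrite map_trmx; apply: h2.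
Qed.

Lemma psd_herm {n} {M : 'M[C]_n} : psdmx M -> M^t* = M.
Proof. by case/psdP. Qed.
Lemma psd_q {n} {M : 'M[C]_n} : psdmx M -> forall v, 0 <= q M v.
Proof. by case/psdP. Qed.

Lemma qD {n} (M N : 'M[C]_n) v : q (M + N) v = q M v + q N v.
Proof. by rewrite /q mulmxDr mulmxDl !mxE. Qed.
Lemma qB {n} (M N : 'M[C]_n) v : q (M - N) v = q M v - q N v.
Proof. by rewrite /q mulmxBr mulmxBl !mxE. Qed.
Lemma qZ {n} (M : 'M[C]_n) c v : q (c *: M) v = c * q M v.
Proof. by rewrite /q -scalemxAr -scalemxAl mxE. Qed.
Lemma qconj {n} (B M : 'M[C]_n) v : B^t* = B -> q (B *m M *m B) v = q M (v *m B).
Proof. by move=> hB; rewrite /q adjM hB !mulmxA. Qed.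

Lemma psdZ {n} (M : 'M[C]_n) c : 0 <= c -> psdmx M -> psdmx (c *: M).
Proof.
move=> c0 /psdP[h1 h2]; apply/psdP; split.
  by rewrite adjZ h1 geC0_conj.
by move=> v; rewrite qZ mulr_ge0.
Qed.

Lemma adj11 (M : 'M[C]_1) : M^t* 0 0 = (M 0 0)^*.
Proof. by rewrite !mxE. Qed.


Lemma q_expand {n} (X : 'M[C]_n) v w t : X^t* = X ->
  q X (v + t *: w) = q X v + t^* * (v *m X *m w^t*) 0 0
     + t * ((v *m X *m w^t*) 0 0)^* + t * t^* * q X w.
Proof.
move=> hX.
have hw : (w *m X *m v^t*) = (v *m X *m w^t*)^t*.
  by rewrite !adjM trmxCK hX mulmxA.
rewrite /q adjD adjZ !mulmxDl !mulmxDr -!scalemxAl -!scalemxAr hw.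
set A := v *m X *m w^t*; set B := v *m X *m v^t*; set D := w *m X *m w^t*.
rewrite !mxE; ring.
Qed.

Lemma psd_q0 {n} (X : 'M[C]_n) v : psdmx X -> q X v = 0 -> v *m X = 0.
Proof.
move=> /psdP[hX hq] hv.
have key : forall w : 'rV[C]_n, (v *m X *m w^t*) 0 0 = 0.
  move=> w; set a := (v *m X *m w^t*) 0 0.
  set c := q X w.
  have c0 : 0 <= c := hq w.
  have c1 : 0 < c + 1 by rewrite ltr_wpDl.
  set s := (c + 1)^-1.
  have s0 : 0 < s by rewrite invr_gt0.
  have := hq (v + (- (s * a)) *: w).
  rewrite q_expand // hv -/a -/c.
  have sr : s^* = s by rewrite geC0_conj // ltW.
  have -> : 0 + (- (s * a))^* * a + - (s * a) * a^* + - (s * a) * (- (s * a))^* * c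
     = s * (a * a^*) * (s * c - 2).
    rewrite rmorphN rmorphM /= sr; ring.
  have sc : s * c - 2 < 0.
    rewrite subr_lt0 mulrC -/(c / (c + 1)) ltr_pdivrMr //.
    apply: (@lt_le_trans _ _ (c + 1)); first by rewrite ltrDl.
    by rewrite ler_peMl ?(ltW c1) // ler1n.
  rewrite nmulr_lge0 // pmulr_rle0 // => h.
  apply/eqP; rewrite -mul_conjC_eq0 eq_le h mul_conjC_ge0 //.
apply/rowP=> j.
have := key (delta_mx 0 j).
have -> : (delta_mx 0 j : 'rV[C]_n)^t* = delta_mx j 0.
  by apply/matrixP=> i k; rewrite !mxE; case: eqP; case: eqP => //= *; rewrite ?rmorph1 ?rmorph0.
by rewrite -colE mxE => ->; rewrite mxE.
Qed.


Lemma ker_incl {n} {X Y : 'M[C]_n} : psdmx X -> psdmx (Y - X) ->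
  forall m (M : 'M[C]_(m, n)), M *m Y = 0 -> M *m X = 0.
Proof.
move=> pX pYX m M hM; apply/row_matrixP => i; rewrite row_mul row0.
have hv : row i M *m Y = 0 by rewrite -row_mul hM row0.
apply: psd_q0 => //.
have qY : q Y (row i M) = 0 by rewrite /q hv mul0mx mxE.
have := (psd_q pYX) (row i M).
rewrite qB qY sub0r oppr_ge0 => h.
by apply/eqP; rewrite eq_le h (psd_q pX).
Qed.

Lemma ker_eq {n} {X Y : 'M[C]_n} : psdmx X -> psdmx (Y - X) -> \rank X = \rank Y ->
  forall m (M : 'M[C]_(m, n)), M *m X = 0 -> M *m Y = 0.
Proof.
move=> pX pYX rXY m M hM.
have s1 : (kermx Y <= kermx X)%MS.
  rewrite sub_kermx; apply/eqP; exact: (ker_incl pX pYX _ _ (mulmx_ker Y)).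
have : \rank (kermx Y) = \rank (kermx X) by rewrite !mxrank_ker rXY.
move/eqP; rewrite (mxrank_leqif_eq s1) => /andP[_ s2].
apply/sub_kermxP; apply: submx_trans s2; exact/sub_kermxP.
Qed.

Definition pinv {n} (M Z : 'M[C]_n) :=
  [/\ M *m Z *m M = M, Z *m M *m Z = Z & M *m Z = Z *m M].

Lemma pinv_sym {n} (M Z : 'M[C]_n) : pinv M Z -> pinv Z M.
Proof. by case=> h1 h2 h3; split. Qed.

Lemma pinv_rank {n} (M Z : 'M[C]_n) : pinv M Z -> \rank Z = \rank M.
Proof.
have H : forall M Z : 'M[C]_n, pinv M Z -> (\rank M <= \rank Z)%N.
  move=> M' Z' [h1 _ _]; rewrite -{1}h1.
  exact: leq_trans (mxrankM_maxl _ _) (mxrankM_maxr _ _).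
by move=> h; apply/eqP; rewrite eqn_leq H ?H //; apply: pinv_sym.
Qed.

Lemma pinvZ {n} (M Z : 'M[C]_n) c : c != 0 -> pinv M Z -> pinv (c *: M) (c^-1 *: Z).
Proof.
move=> c0 [h1 h2 h3]; split.
- rewrite -!scalemxAl -!scalemxAr -!scalemxAl !scalerA h1.
  by rewrite mulfV // mulr1.
- rewrite -!scalemxAl -!scalemxAr -!scalemxAl !scalerA h2.
  by rewrite mulVf // mulr1.
- by rewrite -!scalemxAl -!scalemxAr !scalerA h3 mulrC.
Qed.

Lemma mainL {n} (X Y X' Y' : 'M[C]_n) : psdmx X -> psdmx (Y - X) ->
  \rank X = \rank Y -> pinv X X' -> pinv Y Y' -> X'^t* = X' -> Y'^t* = Y' ->
  psdmx (X' - Y').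
Proof.
move=> pX pYX rXY [x1 x2 x3] [y1 y2 y3] hX' hY'.
have hX : X^t* = X := psd_herm pX.
have e1 : (1%:M - X *m X') *m Y' = 0.
  have : (1%:M - X *m X') *m Y = 0.
    apply: (ker_eq pX pYX rXY _ _); by rewrite mulmxBl mul1mx x1 subrr.
  by move=> h; rewrite -{1}y2 -y3 !mulmxA h !mul0mx.
have e2 : X *m X' *m Y' = Y' by apply/eqP; rewrite eq_sym -subr_eq0 -{1}[Y']mul1mx -mulmxBl e1.
have e3 : Y' *m X *m X' = Y'.
  have := congr1 (fun M => M^t*) e2.
  by rewrite /= !adjM hY' hX' hX -x3 mulmxA.
have e4 : X' *m X *m Y' = Y' by rewrite -x3.
apply/psdP; split; first by rewrite adjB hX' hY'.
move=> w.
have -> : X' - Y' = (X' - Y') *m X *m (X' - Y') + Y' *m (Y - X) *m Y'.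
  by rewrite !mulmxBl !mulmxBr !mulmxBl x2 e4 e3 y2 subrK.
rewrite qD qconj ?qconj ?adjB ?hX' ?hY' //.
apply: addr_ge0; exact: psd_q.
Qed.


Definition finv (x : C) := if x == 0 then 0 else x^-1.

Lemma FM {n} (P : 'M[C]_n) (d1 d2 : 'rV[C]_n) : P \is unitarymx ->
  (P^t* *m diag_mx d1 *m P) *m (P^t* *m diag_mx d2 *m P)
  = P^t* *m diag_mx (\row_j (d1 0 j * d2 0 j)) *m P.
Proof.
move=> /unitarymxP Pu.
by rewrite !mulmxA -[_ *m P *m P^t*]mulmxA Pu mulmx1 -[_ *m diag_mx d1 *m diag_mx d2]mulmxA mulmx_diag.
Qed.

Lemma pinv_diag {n} {P : 'M[C]_n} {d : 'rV[C]_n} : P \is unitarymx -> d \is a realmx ->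
  pinv (P^t* *m diag_mx d *m P) (P^t* *m diag_mx (map_mx finv d) *m P) /\
  (P^t* *m diag_mx (map_mx finv d) *m P)^t* = P^t* *m diag_mx (map_mx finv d) *m P.
Proof.
move=> Pu /mxOverP dr; split; first split.
- rewrite !FM //; congr (_ *m diag_mx _ *m _); apply/rowP => j; rewrite !mxE /finv.
  by case: eqP => [->|h]; rewrite ?mulr0 ?mul0r // mulfV ?mul1r //; apply/eqP.
- rewrite !FM //; congr (_ *m diag_mx _ *m _); apply/rowP => j; rewrite !mxE /finv.
  by case: eqP => [->|h]; rewrite ?mulr0 ?mul0r // mulVf ?mul1r //; apply/eqP.
- rewrite !FM //; congr (_ *m diag_mx _ *m _); apply/rowP => j; rewrite !mxE.
  by rewrite mulrC.
have ee : map_mx Num.conj (map_mx finv d) = map_mx finv d.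
  apply/matrixP => i j; rewrite !mxE /finv (ord1 i).
  case: eqP => _; first by rewrite rmorph0.
  by rewrite fmorphV /= conj_Creal ?dr.
by rewrite !adjM trmxCK mulmxA tr_diag_mx map_diag_mx ee.
Qed.

Lemma supp_inv_props {n} {X : 'M[C]_n} : psdmx X ->
  pinv X (supp_inv X) /\ (supp_inv X)^t* = supp_inv X.
Proof.
move=> pX.
have hX : X \is hermsymmx by case: pX.
have /orthomx_spectralP EX := hermitian_normalmx hX.
have Pu := spectral_unitarymx X.
have dr := hermitian_spectral_diag_real hX.
rewrite invmx_unitary // in EX.
have := pinv_diag Pu dr; rewrite -EX.
by rewrite /supp_inv invmx_unitary.
Qed.


Lemma psd_pinv {n} {X Z : 'M[C]_n} : psdmx X -> pinv X Z -> Z^t* = Z -> psdmx Z.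
Proof.
move=> pX [_ h2 _] hZ; apply/psdP; split => // v.
by rewrite -h2 qconj //; apply: psd_q.
Qed.

End S.

Local Close Scope sesquilinear_scope.

Theorem mainTheorem1 (C : numClosedFieldType) (n : nat) (A B : 'M[C]_n) (k : C) :
  density A -> density B -> \rank A = \rank B ->
  0 <= k <= 1 ->
  (hyponym k A B <-> hyponym k (supp_inv B) (supp_inv A)).
Proof.
move=> [pA _] [pB _] rAB /andP[k0 _].
have [hA hA'] := supp_inv_props pA.
have [hB hB'] := supp_inv_props pB.
have pA' := psd_pinv pA hA hA'.
have pB' := psd_pinv pB hB hB'.
rewrite /hyponym.
have [->|kn0] := eqVneq k 0.
  by rewrite !scale0r !subr0.
have ki0 : 0 <= k^-1 by rewrite invr_ge0.
split => h.
- have := mainL _ _ _ _ (psdZ _ _ k0 pA) h _ (pinvZ _ _ _ kn0 hA) hB (psd_herm (psdZ _ _ ki0 pA')) hB'.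
  rewrite mxrank_scale_nz // => /(_ rAB) h2.
  by have := psdZ _ _ k0 h2; rewrite scalerBr scalerA mulfV // scale1r.
- have := mainL _ _ _ _ (psdZ _ _ k0 pB') h _ (pinvZ _ _ _ kn0 (pinv_sym _ _ hB)) (pinv_sym _ _ hA)
    (psd_herm (psdZ _ _ ki0 pB)) (psd_herm pA).
  rewrite mxrank_scale_nz // (pinv_rank _ _ hB) (pinv_rank _ _ hA) => /(_ (esym rAB)) h2.
  by have := psdZ _ _ k0 h2; rewrite scalerBr scalerA mulfV // scale1r.
Qed.
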